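(* Under the standing setup, with $x^*(g,h)$ the limit of the opinion dynamics, the quantity $f(g,h)\triangleq c^\top x^*(g,h)$ satisfies $$f(g,h)=\frac{(1-2\beta+(h-g)\gamma)\widehat s-\chi+(h+g)\beta+(g^2-h^2)\gamma}{1-\lambda+(g-h)\gamma}\;c^\top\mathbf 1.$$
   Context: Standing setup. Fix $n\in\mathbb N$ and $W=[w_{ij}]\in\mathbb R^{n\times n}$ with $w_{ij}\ge 0$ and $w_{ii}=0$. Let $\|W\|_\infty=\max_i\sum_j|w_{ij}|$, $\|W\|_1=\max_j\sum_i|w_{ij}|$, and let $\lambda$ be the spectral radius of $W$; assume there is a vector $c\in\mathbb R^n$ with all entries positive and $W^\top c=\lambda c$. Fix $\beta,\gamma$ with $\beta\ge\gamma\ge0$ and $1-\max\{\|W\|_\infty,\|W\|_1\}>\max\{2\beta,4\gamma\}$. Fix $s\in[0,1]^n$, $\overline s=\max_i s_i$, $\underline s=\min_i s_i$, and $g,h$ with $0\le g\le\underline s\le\overline s\le h\le1$. Set $\widehat c_i=c_i/\sum_j c_j$, $\widehat s=\sum_i\widehat c_i s_i$, $\chi=\sum_i\widehat c_i s_i\sum_j w_{ij}$. For $x\in\mathbb R$ set $\overline w(x)=\beta-\gamma|x-h|$, $\underline w(x)=\beta-\gamma|x-g|$, $\alpha_i(x)=1-\sum_j w_{ij}-\overline w(x)-\underline w(x)$; the opinion dynamics are $x_i(k+1)=\alpha_i(x_i(k))s_i+\sum_j w_{ij}x_j(k)+\overline w(x_i(k))h+\underline w(x_i(k))g$, which converge (from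 any $x(0)\in[0,1]^n$) to a point $x^*(g,h)$ independent of $x(0)$. *)

(* Defs.v *)
From HB Require Import structures.
From mathcomp Require Import all_boot all_order all_algebra.
Set Implicit Arguments. Unset Strict Implicit. Unset Printing Implicit Defensive.
Import Order.TTheory GRing.Theory Num.Theory.
Local Open Scope ring_scope.

Section Defs.
Variables (R : realFieldType) (n : nat).

Definition normInf (W : 'I_n -> 'I_n -> R) : R :=
  \big[Num.max/0]_(i < n) \sum_(j < n) `|W i j|.
Definition norm1 (W : 'I_n -> 'I_n -> R) : R :=
  \big[Num.max/0]_(j < n) \sum_(i < n) `|W i j|.

(* mu = p + i q is a (complex) eigenvalue of W, with eigenvector a + i b != 0,
   written in real and imaginary parts. *)
Definition complex_eigenpair (W : 'I_n -> 'I_n -> R) (p q : R)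
  (a b : 'I_n -> R) : Prop :=
  (exists i, a i != 0 \/ b i != 0) /\
  forall i, \sum_(j < n) W i j * a j = p * a i - q * b i /\
            \sum_(j < n) W i j * b j = q * a i + p * b i.

Definition is_spectral_radius (W : 'I_n -> 'I_n -> R) (lam : R) : Prop :=
  0 <= lam /\
  (exists p q a b, complex_eigenpair W p q a b /\ p ^+ 2 + q ^+ 2 = lam ^+ 2) /\
  (forall p q a b, complex_eigenpair W p q a b -> p ^+ 2 + q ^+ 2 <= lam ^+ 2).

Definition wbar (beta gamma h x : R) : R := beta - gamma * `|x - h|.
Definition wund (beta gamma g x : R) : R := beta - gamma * `|x - g|.
Definition alpha (W : 'I_n -> 'I_n -> R) (beta gamma g h : R) (i : 'I_n) (x : R) : R :=
  1 - \sum_(j < n) W i j - wbar beta gamma h x - wund beta gamma g x.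

Definition step (W : 'I_n -> 'I_n -> R) (s : 'I_n -> R) (beta gamma g h : R)
  (x : 'I_n -> R) (i : 'I_n) : R :=
  alpha W beta gamma g h i (x i) * s i + \sum_(j < n) W i j * x j
  + wbar beta gamma h (x i) * h + wund beta gamma g (x i) * g.

Definition chat (c : 'I_n -> R) (i : 'I_n) : R := c i / \sum_(j < n) c j.
Definition shat (c s : 'I_n -> R) : R := \sum_(i < n) chat c i * s i.
Definition chi (W : 'I_n -> 'I_n -> R) (c s : 'I_n -> R) : R :=
  \sum_(i < n) chat c i * s i * \sum_(j < n) W i j.

Definition converges_to (x : nat -> 'I_n -> R) (xs : 'I_n -> R) : Prop :=
  forall e : R, 0 < e -> exists N : nat, forall k : nat, (N <= k)%N ->
    forall i, `|x k i - xs i| < e.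
End Defs.

(* Main.v *)
Require Import Defs.
From HB Require Import structures.
From mathcomp Require Import all_boot all_order all_algebra.
From mathcomp Require Import ring lra.
Import Order.TTheory GRing.Theory Num.Theory.
Local Open Scope ring_scope.

Lemma step_bounds (R : realFieldType) (n : nat) (W : 'I_n -> 'I_n -> R) s beta gamma g h
  (y : 'I_n -> R) (i : 'I_n) lo hi lo' hi' :
  (forall j, 0 <= W i j) -> 0 <= gamma -> gamma <= beta ->
  2 * beta < 1 - \sum_(j < n) W i j ->
  0 <= h <= 1 -> 0 <= g <= 1 -> 0 <= y i <= 1 ->
  lo <= s i <= hi -> lo <= h <= hi -> lo <= g <= hi ->
  (forall j, lo' <= y j <= hi') ->
  (1 - \sum_(j < n) W i j) * lo + (\sum_(j < n) W i j) * lo' <= step W s beta gamma g h y i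
  <= (1 - \sum_(j < n) W i j) * hi + (\sum_(j < n) W i j) * hi'.
Proof.
move=> W0 g0 gb rb /andP[h0 h1] /andP[gg0 g1] /andP[y0 y1] /andP[ls hs] /andP[lh hh]
  /andP[lg hg] yb.
set r := \sum_(j < n) W i j in rb *.
have nb : `|y i - h| <= 1 by rewrite ler_norml; apply/andP; split; lra.
have nd : `|y i - g| <= 1 by rewrite ler_norml; apply/andP; split; lra.
have b0 : 0 <= wbar beta gamma h (y i).
  rewrite /wbar; have := ler_wpM2l g0 nb; rewrite mulr1; lra.
have d0 : 0 <= wund beta gamma g (y i).
  rewrite /wund; have := ler_wpM2l g0 nd; rewrite mulr1; lra.
have bb : wbar beta gamma h (y i) <= beta.
  rewrite /wbar; have := mulr_ge0 g0 (normr_ge0 (y i - h)); lra.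
have db : wund beta gamma g (y i) <= beta.
  rewrite /wund; have := mulr_ge0 g0 (normr_ge0 (y i - g)); lra.
have a0 : 0 <= alpha W beta gamma g h i (y i) by rewrite /alpha -/r; lra.
have sumA : alpha W beta gamma g h i (y i) + wbar beta gamma h (y i) + wund beta gamma g (y i) = 1 - r.
  by rewrite /alpha -/r; ring.
have Su : \sum_(j < n) W i j * y j <= r * hi'.
  rewrite /r mulr_suml; apply: ler_sum => j _; apply: ler_wpM2l => //; by case/andP: (yb j).
have Sl : r * lo' <= \sum_(j < n) W i j * y j.
  rewrite /r mulr_suml; apply: ler_sum => j _; apply: ler_wpM2l => //; by case/andP: (yb j).
rewrite /step.
set a := alpha _ _ _ _ _ _ _ in a0 sumA *.
set b := wbar _ _ _ _ in b0 sumA *.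
set d := wund _ _ _ _ in d0 sumA *.
have := ler_wpM2l a0 ls; have := ler_wpM2l a0 hs.
have := ler_wpM2l b0 lh; have := ler_wpM2l b0 hh.
have := ler_wpM2l d0 lg; have := ler_wpM2l d0 hg.
have E1 : (1 - r) * lo = a * lo + b * lo + d * lo by rewrite -sumA; ring.
have E2 : (1 - r) * hi = a * hi + b * hi + d * hi by rewrite -sumA; ring.
rewrite E1 E2 => *.
apply/andP; split; lra.
Qed.
Lemma wdiff (R : realFieldType) beta gamma h (u v : R) :
  0 <= gamma -> `|wbar beta gamma h u - wbar beta gamma h v| <= gamma * `|u - v|.
Proof.
move=> g0; rewrite /wbar.
have -> : beta - gamma * `|u - h| - (beta - gamma * `|v - h|) = gamma * (`|v - h| - `|u - h|) by ring.
rewrite normrM ger0_norm //; apply: ler_wpM2l => //.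
have := ler_dist_dist (v - h) (u - h).
have -> : v - h - (u - h) = - (u - v) by ring.
by rewrite normrN.
Qed.

Lemma step_lip (R : realFieldType) (n : nat) (W : 'I_n -> 'I_n -> R) s beta gamma g h
  (y z : 'I_n -> R) (i : 'I_n) (dl : R) :
  (forall j, 0 <= W i j) -> 0 <= gamma ->
  0 <= h <= 1 -> 0 <= g <= 1 -> 0 <= s i <= 1 ->
  (forall j, `|y j - z j| <= dl) ->
  `|step W s beta gamma g h y i - step W s beta gamma g h z i|
    <= (2 * gamma + \sum_(j < n) W i j) * dl.
Proof.
move=> W0 g0 /andP[h0 h1] /andP[gg0 g1] /andP[s0 s1] yz.
have SD : \sum_(j < n) W i j * y j - \sum_(j < n) W i j * z j = \sum_(j < n) W i j * (y j - z j).
  by rewrite -sumrB; apply: eq_bigr => j _; rewrite mulrBr.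
have E : step W s beta gamma g h y i - step W s beta gamma g h z i =
  (wbar beta gamma h (y i) - wbar beta gamma h (z i)) * (h - s i) +
  (wund beta gamma g (y i) - wund beta gamma g (z i)) * (g - s i) +
  \sum_(j < n) W i j * (y j - z j).
  rewrite -SD /step /alpha /wund; ring.
rewrite E.
have B1 : `|(wbar beta gamma h (y i) - wbar beta gamma h (z i)) * (h - s i)| <= gamma * dl.
  rewrite normrM; apply: le_trans (_ : gamma * dl * 1 <= _); last by rewrite mulr1.
  apply: ler_pM => //.
    by apply: le_trans (wdiff _ _ _ _ _ _ g0) _; apply: ler_wpM2l.
  by rewrite ler_norml; apply/andP; split; lra.
have B2 : `|(wund beta gamma g (y i) - wund beta gamma g (z i)) * (g - s i)| <= gamma * dl.
  rewrite (_ : wund beta gamma g = wbar beta gamma g) //.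
  rewrite normrM; apply: le_trans (_ : gamma * dl * 1 <= _); last by rewrite mulr1.
  apply: ler_pM => //.
    by apply: le_trans (wdiff _ _ _ _ _ _ g0) _; apply: ler_wpM2l.
  by rewrite ler_norml; apply/andP; split; lra.
have B3 : `|\sum_(j < n) W i j * (y j - z j)| <= (\sum_(j < n) W i j) * dl.
  apply: le_trans (ler_norm_sum _ _ _) _.
  rewrite mulr_suml; apply: ler_sum => j _.
  by rewrite normrM ger0_norm //; apply: ler_wpM2l.
apply: le_trans (ler_normD _ _) _.
have := ler_normD ((wbar beta gamma h (y i) - wbar beta gamma h (z i)) * (h - s i))
  ((wund beta gamma g (y i) - wund beta gamma g (z i)) * (g - s i)).
move=> HD; rewrite [X in _ <= X]mulrDl; lra.
Qed.
Lemma lim_bounds (R : realFieldType) (a : nat -> R) (l lo hi : R) :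
  (forall k, lo <= a k <= hi) ->
  (forall e : R, 0 < e -> exists N : nat, forall k : nat, (N <= k)%N -> `|a k - l| < e) ->
  lo <= l <= hi.
Proof.
move=> ab conv; apply/andP; split; rewrite leNgt; apply/negP => H; have H2 : forall u v : R, u < v -> 0 < v - u by move=> u v; rewrite subr_gt0.
  have [N HN] := conv _ (H2 _ _ H).
  have := HN N (leqnn N); have := ab N; rewrite ltr_norml => /andP[? ?] /andP[? ?]; lra.
have [N HN] := conv _ (H2 _ _ H).
have := HN N (leqnn N); have := ab N; rewrite ltr_norml => /andP[? ?] /andP[? ?]; lra.
Qed.

Lemma eq_small (R : realFieldType) (a b : R) :
  (forall e : R, 0 < e -> `|a - b| < e) -> a = b.
Proof.
move=> H; apply/eqP; rewrite -subr_eq0 -normr_le0 leNgt; apply/negP => Hp.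
by have := H _ Hp; rewrite ltxx.
Qed.

Theorem corollary1 (R : realFieldType) (n : nat)
  (W : 'I_n -> 'I_n -> R) (lam : R) (c : 'I_n -> R)
  (beta gamma g h : R) (s : 'I_n -> R)
  (x : nat -> 'I_n -> R) (xstar : 'I_n -> R) :
  (forall i j, 0 <= W i j) ->
  (forall i, W i i = 0) ->
  is_spectral_radius W lam ->
  (forall i, 0 < c i) ->
  (forall j, \sum_(i < n) W i j * c i = lam * c j) ->
  gamma <= beta -> 0 <= gamma ->
  Num.max (2 * beta) (4 * gamma) < 1 - Num.max (normInf W) (norm1 W) ->
  (forall i, 0 <= s i <= 1) ->
  0 <= g -> h <= 1 ->
  (forall i, g <= s i) -> (forall i, s i <= h) ->
  (forall i, 0 <= x 0%N i <= 1) ->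
  (forall k i, x k.+1 i = step W s beta gamma g h (x k) i) ->
  converges_to x xstar ->
  \sum_(i < n) c i * xstar i =
    ((1 - 2 * beta + (h - g) * gamma) * shat c s - chi W c s
      + (h + g) * beta + (g ^+ 2 - h ^+ 2) * gamma)
    / (1 - lam + (g - h) * gamma) * \sum_(i < n) c i.
Proof.
move=> W0 Wd _ c0 Wc gb g0 hmax s01 gg0 h1 gs sh x0 xs conv.
have [n0|npos] := posnP n.
  have E0 : forall F : 'I_n -> R, \sum_(i < n) F i = 0.
    by move=> F; apply: big1 => i; have := ltn_ord i; rewrite {2}n0.
  by rewrite !E0 mulr0.
pose i0 := Ordinal npos.
have hrI : forall i, \sum_(j < n) W i j <= normInf W.
  move=> i; rewrite /normInf; apply: le_trans (le_bigmax _ _ i).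
  by apply: ler_sum => j _; rewrite ger0_norm.
have m1 : normInf W <= Num.max (normInf W) (norm1 W) by rewrite le_max lexx.
have m2 : 2 * beta <= Num.max (2 * beta) (4 * gamma) by rewrite le_max lexx.
have m3 : 4 * gamma <= Num.max (2 * beta) (4 * gamma) by rewrite le_max lexx orbT.
have hr : forall i, 2 * beta < 1 - \sum_(j < n) W i j.
  move=> i; have := hrI i; lra.
have hr0 : forall i, 0 <= \sum_(j < n) W i j.
  by move=> i; apply: sumr_ge0 => j _.
have h0 : 0 <= h by have := gs i0; have := sh i0; lra.
have g1 : g <= 1 by have := gs i0; have := sh i0; lra.
have hg : g <= h by have := gs i0; have := sh i0; lra.
have hx : forall k i, 0 <= x k i <= 1.
  elim=> [|k IH] i; first exact: x0.
  rewrite xs.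
  have := @step_bounds R n W s beta gamma g h (x k) i 0 1 0 1 (W0 i) g0 gb (hr i).
  rewrite !mulr0 !mulr1 addr0 subrK; apply.
  - by rewrite h0.
  - by rewrite gg0.
  - exact: IH.
  - exact: s01.
  - by rewrite h0.
  - by rewrite gg0.
  - exact: IH.
have hxs : forall i, 0 <= xstar i <= 1.
  move=> i; apply: (@lim_bounds R (fun k => x k i)) => [k|e e0]; first exact: hx.
  by have [N HN] := conv e e0; exists N => k Hk; apply: HN.
have hfix : forall i, xstar i = step W s beta gamma g h xstar i.
  move=> i; apply: eq_small => e e0.
  set K := 2 * gamma + \sum_(j < n) W i j + 1.
  have K0 : 0 < K by rewrite /K; have := hr0 i; lra.
  have dl0 : 0 < e / (2 * K) by apply: divr_gt0 => //; lra.
  have [N HN] := conv _ dl0.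
  have Kd : K * (e / (2 * K)) = e / 2 by field; rewrite lt0r_neq0.
  have L := @step_lip R n W s beta gamma g h (x N) xstar i (e / (2 * K)) (W0 i) g0.
  have L2 : `|step W s beta gamma g h (x N) i - step W s beta gamma g h xstar i|
     <= (2 * gamma + \sum_(j < n) W i j) * (e / (2 * K)).
    apply: L; first by rewrite h0.
    - by rewrite gg0.
    - exact: s01.
    - by move=> j; apply: ltW; apply: HN.
  have L1 : `|xstar i - x N.+1 i| < e / (2 * K) by rewrite distrC; apply: HN.
  have -> : xstar i - step W s beta gamma g h xstar i =
    (xstar i - x N.+1 i) + (step W s beta gamma g h (x N) i - step W s beta gamma g h xstar i).
    by rewrite xs; ring.
  apply: le_lt_trans (ler_normD _ _) _.
  move: Kd; rewrite /K => Kd; lra.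
have H2' : forall u v : R, u < v -> 0 < v - u by move=> u v; rewrite subr_gt0.
have hub : forall i, xstar i <= h.
  case: (@arg_maxP _ _ _ i0 predT xstar isT) => im _ Him.
  have Hle : forall j, xstar j <= xstar im by move=> j; exact: Him.
  have := @step_bounds R n W s beta gamma g h xstar im 0 h 0 (xstar im) (W0 im) g0 gb (hr im).
  have hh01 : 0 <= h <= 1 by rewrite h0.
  have hg01 : 0 <= g <= 1 by rewrite gg0.
  move=> /(_ hh01 hg01 (hxs im)).
  have hs1 : 0 <= s im <= h by rewrite (sh im) andbT; case/andP: (s01 im).
  have hs2 : 0 <= h <= h by rewrite h0 lexx.
  have hs3 : 0 <= g <= h by rewrite gg0 hg.
  have hs4 : forall j, 0 <= xstar j <= xstar im.
    by move=> j; rewrite Hle andbT; case/andP: (hxs j).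
  move=> /(_ hs1 hs2 hs3 hs4); rewrite -hfix => /andP[_ Hs].
  have := hr im; have := hr0 im.
  set r := \sum_(j < n) W im j.
  move: Hs; rewrite -/r => Hs r0 r1 j; apply: le_trans (Hle j) _.
  have rl : 0 < 1 - r by lra.
  rewrite leNgt; apply/negP => H.
  have := mulr_gt0 rl (H2' _ _ H); lra.
have hlb : forall i, g <= xstar i.
  case: (@arg_minP _ _ _ i0 predT xstar isT) => im _ Him.
  have Hle : forall j, xstar im <= xstar j by move=> j; exact: Him.
  have := @step_bounds R n W s beta gamma g h xstar im g 1 (xstar im) 1 (W0 im) g0 gb (hr im).
  have hh01 : 0 <= h <= 1 by rewrite h0.
  have hg01 : 0 <= g <= 1 by rewrite gg0.
  move=> /(_ hh01 hg01 (hxs im)).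
  have hs1 : g <= s im <= 1 by rewrite (gs im); case/andP: (s01 im).
  have hs2 : g <= h <= 1 by rewrite hg.
  have hs3 : g <= g <= 1 by rewrite lexx.
  have hs4 : forall j, xstar im <= xstar j <= 1.
    by move=> j; rewrite Hle; case/andP: (hxs j).
  move=> /(_ hs1 hs2 hs3 hs4); rewrite -hfix => /andP[Hs _].
  have := hr im; have := hr0 im.
  set r := \sum_(j < n) W im j.
  move: Hs; rewrite -/r => Hs r0 r1 j; apply: le_trans (Hle j).
  have rl : 0 < 1 - r by lra.
  rewrite leNgt; apply/negP => H.
  have := mulr_gt0 rl (H2' _ _ H); lra.
set A := 1 - 2 * beta + (h - g) * gamma.
set B := (h + g) * beta + (g ^+ 2 - h ^+ 2) * gamma.
have hid : forall i, c i * xstar i * (1 - (h - g) * gamma) =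
   c i * (A * s i - s i * \sum_(j < n) W i j + \sum_(j < n) W i j * xstar j + B).
  move=> i; rewrite -mulrA; congr (_ * _).
  have E := hfix i; move: E.
  rewrite /step /alpha /wbar /wund (ler0_norm (_ : xstar i - h <= 0)); last first.
    by have := hub i; lra.
  rewrite (ger0_norm (_ : 0 <= xstar i - g)); last by have := hlb i; lra.
  rewrite /A /B => E.
  rewrite mulrBr mulr1 {1}E; ring.
set f := \sum_(i < n) c i * xstar i.
set C := \sum_(i < n) c i.
set S1 := \sum_(i < n) c i * s i.
set S2 := \sum_(i < n) c i * s i * \sum_(j < n) W i j.
have T : \sum_(i < n) c i * \sum_(j < n) W i j * xstar j = lam * f.
  have -> : \sum_(i < n) c i * \sum_(j < n) W i j * xstar j =
            \sum_(i < n) \sum_(j < n) c i * (W i j * xstar j).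
    by apply: eq_bigr => i _; rewrite mulr_sumr.
  rewrite exchange_big /f mulr_sumr; apply: eq_bigr => j _.
  rewrite mulrA -Wc mulr_suml; apply: eq_bigr => i _; ring.
have key : f * (1 - (h - g) * gamma) = A * S1 - S2 + lam * f + B * C.
  rewrite /f mulr_suml (eq_bigr _ (fun i _ => hid i)) -T /S1 /S2 /C.
  rewrite !mulr_sumr -sumrN -!big_split /=; apply: eq_bigr => i _; ring.
have C0 : 0 < C by rewrite /C (bigD1 i0) //=; apply: ltr_wpDr; [apply: sumr_ge0 => i _; apply: ltW|].
have lamC : lam * C = \sum_(i < n) c i * \sum_(j < n) W i j.
  rewrite /C mulr_sumr; under eq_bigr do rewrite -Wc.
  rewrite exchange_big; apply: eq_bigr => i _; rewrite mulr_sumr; apply: eq_bigr => j _; ring.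
have lamI : lam <= normInf W.
  rewrite -(ler_pM2r C0) lamC /C mulr_sumr; apply: ler_sum => i _.
  rewrite mulrC; apply: ler_wpM2r; [exact: ltW | exact: hrI].
have hgl : (h - g) * gamma <= gamma.
  have := ler_wpM2r g0 (_ : h - g <= 1); rewrite mul1r; apply; lra.
have D0 : 0 < 1 - lam + (g - h) * gamma.
  have -> : (g - h) * gamma = - ((h - g) * gamma) by ring.
  lra.
have Dn : 1 - lam + (g - h) * gamma != 0 by rewrite lt0r_neq0.
have Cn : C != 0 by rewrite lt0r_neq0.
have fD : f * (1 - lam + (g - h) * gamma) = A * S1 - S2 + B * C.
  move: key; lra.
have -> : shat c s = S1 / C.
  by rewrite /shat /S1 mulr_suml; apply: eq_bigr => i _; rewrite /chat mulrAC.
have -> : chi W c s = S2 / C.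
  by rewrite /chi /S2 mulr_suml; apply: eq_bigr => i _; rewrite /chat; ring.
apply: (mulIf Dn); rewrite fD /B; field.
by rewrite Dn Cn.
Qed.
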